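(* Let $\mathcal{N}=(D,P)$ be a broadcast network with client $P=(Q,I,\delta)$, let $m\le |Q|$ and $s_1,\dots,s_m\in Q$. There is a cycle $(\{s_1\},\dots,\{s_m\})\to_G^+(\{s_1\},\dots,\{s_m\})$ (a path with at least one edge) in the graph $G$ if and only if there is a configuration $c$ with $\mathrm{Set}(c)=\{s_1,\dots,s_m\}$ and $c\to^+ c$.
   Context: A broadcast network is a pair $\mathcal{N}=(D,P)$ where $D$ is a finite set of messages and $P=(Q,I,\delta)$ is a finite automaton with transition relation $\delta\subseteq Q\times \mathrm{Ops}(D)\times Q$, $\mathrm{Ops}(D)=\{!a,\ ?a : a\in D\}$; write $q\xrightarrow{o}q'$ for $(q,o,q')\in\delta$. A configuration is a tuple $c\in Q^k$, $k\in\mathbb{N}$, with entries $c[i]$ and set of occurring states $\mathrm{Set}(c)$. For $c,c'\in Q^k$ and $a\in D$, $c\xrightarrow{a}c'$ holds if some index $i$ has $c[i]\xrightarrow{!a}c'[i]$, there is $R\subseteq[1..k]\setminus\{i\}$ with $c[j]\xrightarrow{?a}c'[j]$ for all $j\in R$, and $c[j]=c'[j]$ for $j\notin R\cup\{i\}$; $c\to^+c'$ means a sequence of at least one such transition. For $S\subseteq Q$ and $a\in D$ let $\mathrm{Post}_{?a}(S)=\{r'\in Q: \exists r\in S,\ r\xrightarrow{?a}r'\}$ and $\mathrm{Enabled}_{?a}(S)=\{r\in S : \mathrm{Post}_{?a}(\{r\})\neq\emptyset\}$. The graph $G=(V,\to_G)$ has vertex set $V=\bigcup_{k\le|Q|}(2^Q)^k$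 (tuples of sets of states). There is an edge $(S_1,\dots,S_k)\to_G(S'_1,\dots,S'_k)$ iff: (1) there are $j\in[1..k]$, $s\in S_j$, $s'\in S'_j$, $a\in D$ with $s\xrightarrow{!a}s'$; (2) for each $i\in[1..k]$ there are $\mathrm{Gen}_i\subseteq\mathrm{Post}_{?a}(S_i)$ and $\mathrm{Kill}_i\subseteq\mathrm{Enabled}_{?a}(S_i)$ such that $S'_i=(S_i\setminus\mathrm{Kill}_i)\cup\mathrm{Gen}_i$ for $i\neq j$ and $S'_j=(U_j\setminus\mathrm{Kill}_j)\cup\mathrm{Gen}_j\cup\{s'\}$, where $U_j$ is either $S_j$ or $S_j\setminus\{s\}$; (3) for each $i\in[1..k]$ and each $q\in\mathrm{Kill}_i$, $\mathrm{Post}_{?a}(\{q\})\cap\mathrm{Gen}_i\neq\emptyset$. *)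

(* Defs.v *)
From mathcomp Require Import all_boot.
From Stdlib Require Export Relations.Relation_Operators.
Set Implicit Arguments. Unset Strict Implicit. Unset Printing Implicit Defensive.

(* D and Q are finite types,
   I : {set Q} the initial states, delta : Q -> Ops D -> Q -> bool the
   transition relation (q --o--> q' iff delta q o q'). *)
Inductive Ops (D : Type) : Type :=
| Send of D
| Recv of D.

Section Broadcast.
Variables (D Q : finType) (delta : Q -> Ops D -> Q -> bool).

Definition config (k : nat) := {ffun 'I_k -> Q}.

Definition SetC k (c : config k) : {set Q} := [set c i | i in 'I_k].

Definition cstep_a k (a : D) (c c' : config k) : Prop :=
  exists i : 'I_k, delta (c i) (Send a) (c' i) /\
  exists R : {set 'I_k}, i \notin R /\
    (forall j, j \in R -> delta (c j) (Recv a) (c' j)) /\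
    (forall j, j \notin R -> j != i -> c j = c' j).

Definition cstep k (c c' : config k) : Prop := exists a, cstep_a a c c'.

Definition cstep_plus k := clos_trans (config k) (@cstep k).

Definition Post (a : D) (S : {set Q}) : {set Q} :=
  [set r' | [exists r in S, delta r (Recv a) r']].

Definition Enabled (a : D) (S : {set Q}) : {set Q} :=
  [set r in S | Post a [set r] != set0].

Definition vertex (k : nat) := {ffun 'I_k -> {set Q}}.

Definition Gedge k (S S' : vertex k) : Prop :=
  exists (j : 'I_k) (s s' : Q) (a : D),
    [/\ s \in S j, s' \in S' j & delta s (Send a) s'] /\
  exists Gen Kill : 'I_k -> {set Q},
    [/\ (forall i, Gen i \subset Post a (S i)),
        (forall i, Kill i \subset Enabled a (S i)),
        (forall i, i != j -> S' i = (S i :\: Kill i) :|: Gen i),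
        (exists U : {set Q}, (U = S j \/ U = S j :\ s) /\
            S' j = ((U :\: Kill j) :|: Gen j) :|: [set s'])
      & (forall i q, q \in Kill i -> Post a [set q] :&: Gen i != set0)].

Definition Gpath_plus k := clos_trans (vertex k) (@Gedge k).

End Broadcast.

(* Main.v *)
Require Import Defs.
From mathcomp Require Import all_boot.
Set Implicit Arguments. Unset Strict Implicit. Unset Printing Implicit Defensive.


Section Back.
Variables (D Q : finType) (delta : Q -> Ops D -> Q -> bool) (m : nat) (s : 'I_m -> Q).
Variables (k : nat) (g : 'I_k -> 'I_m).

Definition Phi (d : config Q k) : vertex Q m :=
  [ffun i => if [exists y, g y == i] then [set d y | y in [pred y | g y == i]]
             else [set s i]].

Lemma Phi_mem d i q : [exists y, g y == i] ->
  (q \in Phi d i) = [exists y, (g y == i) && (d y == q)].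
Proof.
move=> ne; rewrite ffunE ne; apply/imsetP/existsP.
  by case=> y; rewrite inE => gy ->; exists y; rewrite gy eqxx.
by case=> y /andP [gy /eqP <-]; exists y.
Qed.

Lemma step_edge d d' : cstep delta d d' -> Gedge delta (Phi d) (Phi d').
Proof.
case=> a [x0 [Hs [R [x0R [HR Hout]]]]].
set j := g x0.
have nej : [exists y, g y == j] by apply/existsP; exists x0.
exists j, (d x0), (d' x0), a; split.
  split => //; rewrite Phi_mem //; apply/existsP; exists x0; by rewrite !eqxx.
pose Gen i := [set d' y | y in [pred y | (g y == i) && (y \in R)]].
pose Kill i := [set q | [exists y, [&& g y == i, y != x0 & d y == q]] &&
                       [forall y, [&& g y == i, y != x0 & d y == q] ==> (y \in R)]].
have GenP i q : (q \in Gen i) = [exists y, [&& g y == i, y \in R & d' y == q]].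
  apply/imsetP/existsP.
    by case=> y /= /andP [gy yR] ->; exists y; rewrite gy yR eqxx.
  by case=> y /and3P [gy yR /eqP <-]; exists y => //; rewrite inE gy.
exists Gen, Kill; split.
- move=> i; apply/subsetP => q; rewrite GenP => /existsP [y /and3P [gy yR /eqP <-]].
  rewrite inE; apply/existsP; exists (d y); rewrite Phi_mem; last by apply/existsP; exists y.
  rewrite HR // andbT; apply/existsP; exists y; by rewrite gy eqxx.
- move=> i; apply/subsetP => q; rewrite inE => /andP [/existsP [y /and3P [gy yx /eqP dy]] /forallP al].
  have yR : y \in R by move: (al y); rewrite gy yx dy eqxx.
  rewrite inE Phi_mem; last by apply/existsP; exists y.
  rewrite -dy; apply/andP; split; first by apply/existsP; exists y; rewrite gy eqxx.
  apply/set0Pn; exists (d' y); rewrite inE; apply/existsP; exists (d y); by rewrite inE eqxx HR.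
- move=> i ij.
  case: (boolP [exists y, g y == i]) => nei; last first.
    have G0 : Gen i = set0.
      apply/setP => q; rewrite GenP inE; apply/existsP => [[y /and3P [gy _ _]]].
      by move/negP: nei; apply; apply/existsP; exists y.
    have K0 : Kill i = set0.
      apply/setP => q; rewrite !inE; apply/negP => /andP [/existsP [y /and3P [gy _ _]] _].
      by move/negP: nei; apply; apply/existsP; exists y.
    by rewrite !ffunE (negbTE nei) G0 K0 setD0 setU0.
  apply/setP => q; rewrite inE in_setD !Phi_mem // GenP inE.
  apply/idP/idP.
    case/existsP=> y /andP [gy /eqP dy].
    case: (boolP (y \in R)) => yR.
      by rewrite orbC; apply/orP; left; apply/existsP; exists y; rewrite gy yR dy eqxx.
    have yx : y != x0 by apply/eqP => yx; move: ij; rewrite /j -yx (eqP gy) eqxx.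
    have dd : d y = q by rewrite Hout.
    apply/orP; left; apply/andP; split; last by apply/existsP; exists y; rewrite gy dd eqxx.
    rewrite negb_and; apply/orP; right; rewrite negb_forall; apply/existsP; exists y.
    by rewrite gy yx dd eqxx /= yR.
  case/orP.
  idtac.
    case/andP => nK /existsP [y0 /andP [gy0 /eqP dy0]].
    move: nK; rewrite negb_and => /orP [nw|].
      have y0x : y0 != x0 by apply/eqP => yx; move: ij; rewrite /j -yx (eqP gy0) eqxx.
      by move/existsPn: nw => /(_ y0); rewrite gy0 y0x dy0 eqxx.
    rewrite negb_forall => /existsP [y]; rewrite negb_imply => /andP [/and3P [gy yx /eqP dy] yR].
    by apply/existsP; exists y; rewrite gy -(Hout y yR yx) dy eqxx.
  by case/existsP => y /and3P [gy yR dy]; apply/existsP; exists y; rewrite gy dy.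
- set cond := [forall y, [&& g y == j, y != x0 & d y == d x0] ==> (y \in R)].
  exists (if cond then Phi d j :\ d x0 else Phi d j); split.
    by case: cond; [right|left].
  apply/setP => q; rewrite !inE Phi_mem // GenP.
  have UP : (q \in (if cond then Phi d j :\ d x0 else Phi d j)) =
            (if cond then (q != d x0) && (q \in Phi d j) else q \in Phi d j).
    by case: cond; rewrite ?inE.
  rewrite UP Phi_mem //.
  apply/idP/idP.
    case/existsP => y /andP [gy /eqP dy].
    case: (eqVneq y x0) => [yx|yx].
      by rewrite -dy yx eqxx !orbT.
    case: (boolP (y \in R)) => yR.
      by apply/orP; left; apply/orP; right; apply/existsP; exists y; rewrite gy yR dy eqxx.
    have dd : d y = q by rewrite Hout.
    have inPhi : [exists y, (g y == j) && (d y == q)] by apply/existsP; exists y; rewrite gy dd eqxx.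
    apply/orP; left; apply/orP; left; apply/andP; split.
      rewrite negb_and; apply/orP; right; rewrite negb_forall; apply/existsP; exists y.
      by rewrite gy yx dd eqxx /= yR.
    case: (boolP cond) => cnd //; rewrite inPhi andbT; apply/eqP => qs.
    by move/forallP: cnd => /(_ y); rewrite gy yx dd qs eqxx /= (negbTE yR).
  case/orP; last by move=> /eqP ->; apply/existsP; exists x0; rewrite /j !eqxx.
  case/orP; last by case/existsP => y /and3P [gy yR dy]; apply/existsP; exists y; rewrite gy dy.
  case/andP => nK inU.
  have [y0 /andP [gy0 /eqP dy0]] : exists y, (g y == j) && (d y == q).
    by move: inU; clear UP; case: cond => [/andP [_ /existsP]|/existsP].
  case: (boolP [forall y, [&& g y == j, y != x0 & d y == q] ==> (y \in R)]) => al.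
    have nw : ~~ [exists y, [&& g y == j, y != x0 & d y == q]] by move: nK; rewrite al andbT.
    have y0x : y0 = x0.
      by apply/eqP; move/existsPn: nw => /(_ y0); rewrite gy0 dy0 eqxx andbT negbK.
    have cT : cond.
      apply/forallP => y; apply/implyP => /and3P [gy yx dy].
      by move/forallP: al => /(_ y); rewrite gy yx -dy0 y0x dy.
    by move: inU; rewrite cT -dy0 y0x eqxx.
  move/forallPn: al => [y]; rewrite negb_imply => /andP [/and3P [gy yx /eqP dy] yR].
  by apply/existsP; exists y; rewrite gy -(Hout y yR yx) dy eqxx.
- move=> i q; rewrite inE => /andP [/existsP [y /and3P [gy yx /eqP dy]] /forallP al].
  have yR : y \in R by move: (al y); rewrite gy yx dy eqxx.
  apply/set0Pn; exists (d' y); rewrite inE; apply/andP; split.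
    rewrite inE; apply/existsP; exists q; by rewrite inE eqxx -dy HR.
  by rewrite GenP; apply/existsP; exists y; rewrite gy yR eqxx.
Qed.

Lemma path_edge c c' : cstep_plus delta c c' -> Gpath_plus delta (Phi c) (Phi c').
Proof.
elim=> [x y H|x y z _ IH1 _ IH2]; first by apply: t_step; apply: step_edge.
exact: t_trans IH1 IH2.
Qed.
End Back.

Lemma ct_path (X Y : Type) (R : X -> X -> Prop) (E : X -> Y -> X -> Prop) x y :
  (forall u v, R u v -> exists e, E u e v) -> clos_trans X R x y ->
  exists n (f : nat -> X) (h : nat -> Y), [/\ 0 < n, f 0 = x, f n = y &
     forall t, t < n -> E (f t) (h t) (f t.+1)].
Proof.
move=> HRE; elim=> [u v /HRE [e He]|u v w _ [n1 [f1 [h1 [n1p f10 f1n H1]]]] _ [n2 [f2 [h2 [n2p f20 f2n H2]]]]].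
  exists 1, (fun t => if t == 0 then u else v), (fun _ => e); split => //.
  by case.
exists (n1 + n2), (fun t => if t <= n1 then f1 t else f2 (t - n1)),
  (fun t => if t < n1 then h1 t else h2 (t - n1)); split.
- by rewrite addn_gt0 n1p.
- by rewrite leq0n.
- rewrite leqNgt -{1}(addn0 n1) ltn_add2l n2p /= addKn //.
- move=> t tn; case: (ltnP t n1) => tn1.
    by rewrite (ltnW tn1); apply: H1.
  case: (eqVneq t n1) => [->|tn1'].
    rewrite leqnn subnn f1n -f20 subSnn; exact: H2.
  have tn1s : n1 < t by rewrite ltn_neqAle eq_sym tn1' tn1.
  rewrite leqNgt tn1s /= subSn //; apply: H2.
  by rewrite ltn_subLR // addnC.
Qed.

Lemma sends (D Q : finType) (delta : Q -> Ops D -> Q -> bool) k (a : D) :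
  forall (L : {set 'I_k}) (c c' : config Q k),
  (forall x, x \notin L -> c x = c' x) ->
  (forall x, x \in L -> delta (c x) (Send a) (c' x)) ->
  c = c' \/ cstep_plus delta c c'.
Proof.
move=> L; have [N HN] : exists N, #|L| = N by exists #|L|.
elim: N L HN => [|N IH] L HN c c' Hout Hin.
  left; apply/ffunP => x; apply: Hout; by rewrite (card0_eq HN).
have [x xL] : exists x, x \in L.
  by apply/existsP; rewrite -(negbK [exists x, _]) negb_exists; apply/negP => /forallP H;
     move: HN; rewrite (eq_card0 (A := L)) // => y; apply/negbTE/H.
pose c1 : config Q k := [ffun y => if y == x then c' x else c y].
have st : cstep delta c c1.
  exists a, x; rewrite ffunE eqxx; split; first exact: Hin.
  exists set0; split; first by rewrite inE.
  split; first by move=> j; rewrite inE.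
  by move=> j _ jx; rewrite ffunE (negbTE jx).
have := IH (L :\ x) _ c1 c'.
case.
- by rewrite (cardsD1 x L) xL add1n in HN; case: HN.
- move=> y; rewrite ffunE !inE negb_and negbK; case: eqVneq => [->|yx] //= yL.
  exact: Hout.
- move=> y; rewrite ffunE !inE => /andP [yx yL]; rewrite (negbTE yx); exact: Hin.
- by move=> <-; right; apply: t_step.
- by move=> H; right; apply: t_trans H; apply: t_step.
Qed.

Section Fwd.
Variables (D Q : finType) (delta : Q -> Ops D -> Q -> bool) (m : nat) (s : 'I_m -> Q).

Definition EData := ('I_m * Q * Q * D)%type.
Definition mv (e : EData) (i : 'I_m) (q q' : Q) (b : bool) : bool :=
  if b then [&& i == e.1.1.1, q == e.1.1.2 & q' == e.1.2]
  else (q' == q) || delta q (Recv e.2) q'.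

Definition Ework (V : vertex Q m) (e : EData) (V' : vertex Q m) : Prop :=
  [/\ delta e.1.1.2 (Send e.2) e.1.2, e.1.1.2 \in V e.1.1.1, e.1.2 \in V' e.1.1.1,
   (forall i q', q' \in V' i -> exists q b, q \in V i /\ mv e i q q' b) &
   (forall i q, q \in V i -> exists q' b, q' \in V' i /\ mv e i q q' b)].

Lemma edge_work V V' : Gedge delta V V' -> exists e, Ework V e V'.
Proof.
case=> j [s0 [s1 [a [[Hs0 Hs1 Hd] [Gen [Kill [HG HK Hi [U [HU Hj]] HKG]]]]]]].
exists (j, s0, s1, a); split => //=.
- have GenC i q' : q' \in Gen i -> exists q b, q \in V i /\ mv (j, s0, s1, a) i q q' b.
    move=> /(subsetP (HG i)); rewrite inE => /existsP [q /andP [qV dq]].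
    by exists q, false; rewrite /mv /= dq orbT.
  move=> i q'.
  case: (eqVneq i j) => [->|ij].
    rewrite Hj !inE => /orP [/orP [/andP [_ qU]|qG]|/eqP ->].
      exists q', false; split; last by rewrite /mv eqxx.
      by case: HU qU => ->; rewrite ?inE // => /andP [].
      exact: GenC.
    by exists s0, true; rewrite /mv /= !eqxx.
  rewrite Hi // inE => /orP [|qG]; last exact: GenC.
  rewrite inE => /andP [_ qV]; exists q', false; by rewrite /mv eqxx.
- move=> i q qV.
  case: (boolP (q \in Kill i)) => qK.
    have /set0Pn [q' ] := HKG i q qK; rewrite inE => /andP [qP qG].
    exists q', false; split.
      case: (eqVneq i j) qG => [->|ij] qG; first by rewrite Hj !inE qG !orbT.
      by rewrite Hi // inE qG orbT.
    rewrite /mv /=; move: qP; rewrite inE => /existsP [r /andP [/set1P -> ->]]; by rewrite orbT.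
  case: (eqVneq i j) => [ij|ij].
    case: (eqVneq q s0) => [qs|qs].
      by exists s1, true; split; [rewrite ij | rewrite /mv /= ij qs !eqxx].
    exists q, false; split; last by rewrite /mv eqxx.
    rewrite ij Hj !inE; apply/orP; left; apply/orP; left; rewrite -ij qK /=.
    by case: HU => ->; rewrite ?inE ?qs -?ij.
  exists q, false; split; last by rewrite /mv eqxx.
  by rewrite Hi // !inE qK qV.
Qed.
End Fwd.

Section Traj.
Variables (D Q : finType) (delta : Q -> Ops D -> Q -> bool) (m : nat) (s : 'I_m -> Q).
Variables (n : nat) (Vs : nat -> vertex Q m) (h : nat -> EData D Q m).
Hypotheses (n0 : 0 < n) (V0s : Vs 0 = [ffun i => [set s i]]) (Vns : Vs n = [ffun i => [set s i]])
  (HE : forall t, t < n -> Ework delta (Vs t) (h t) (Vs t.+1)).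

Local Notation mv := (mv delta).

Lemma back t : t <= n -> forall i q, q \in Vs t i -> exists (f : nat -> Q) (b : nat -> bool),
  [/\ f t = q, f 0 = s i & forall u, u < t -> mv (h u) i (f u) (f u.+1) (b u)].
Proof.
elim: t => [|t IH] tn i q.
  rewrite V0s ffunE inE => /eqP ->; by exists (fun _ => s i), (fun _ => false).
move=> qV; have [_ _ _ Hp _] := HE tn.
have [q0 [b0 [q0V mv0]]] := Hp i q qV.
have [f [b [f0 fs Hf]]] := IH (ltnW tn) i q0 q0V.
exists (fun u => if u == t.+1 then q else f u), (fun u => if u == t then b0 else b u); split.
- by rewrite eqxx.
- by [].
- move=> u; rewrite ltnS leq_eqVlt => /orP [/eqP ->|ut].
    by rewrite eqxx (ltn_eqF (ltnSn t)) eqxx f0.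
  rewrite (ltn_eqF ut) (ltn_eqF (leqW ut)) (_ : (u.+1 == t.+1) = false); first exact: Hf.
  by rewrite eqSS (ltn_eqF ut).
Qed.

Lemma fwd_tr d : forall t, t + d = n -> forall i q, q \in Vs t i ->
  exists (f : nat -> Q) (b : nat -> bool),
  [/\ f t = q, f n = s i & forall u, t <= u -> u < n -> mv (h u) i (f u) (f u.+1) (b u)].
Proof.
elim: d => [|d IH] t tdn i q.
  rewrite addn0 in tdn; rewrite tdn Vns ffunE inE => /eqP ->.
  exists (fun _ => s i), (fun _ => false); split => // u tu un.
  by move: (leq_ltn_trans tu un); rewrite ltnn.
move=> qV.
have tn : t < n by rewrite -tdn -addSnnS leq_addr.
have [_ _ _ _ Hs] := HE tn.
have [q' [b0 [q'V mv0]]] := Hs i q qV.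
have e1 : t.+1 + d = n by rewrite addSnnS.
have [f [b [f0 fs Hf]]] := IH t.+1 e1 i q' q'V.
exists (fun u => if u == t then q else f u), (fun u => if u == t then b0 else b u); split.
- by rewrite eqxx.
- by rewrite (gtn_eqF tn).
- move=> u tu un; case: (eqVneq u t) => [->|ut].
    by rewrite (gtn_eqF (ltnSn t)) f0.
  have tu' : t < u by rewrite ltn_neqAle eq_sym ut tu.
  rewrite (gtn_eqF (leqW tu')); exact: Hf.
Qed.

Definition atn (T : Type) (f : {ffun 'I_n.+1 -> T}) (u : nat) : T := f (inord u).
Definition PT := ('I_m * {ffun 'I_n.+1 -> Q} * {ffun 'I_n.+1 -> bool})%type.
Definition valid (p : PT) : bool :=
  [&& atn p.1.2 0 == s p.1.1, atn p.1.2 n == s p.1.1 &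
      [forall u : 'I_n, mv (h u) p.1.1 (atn p.1.2 u) (atn p.1.2 u.+1) (atn p.2 u)]].
Definition PP := {p : PT | valid p}.
Definition K := #|{: PP}|.
Definition proc (x : 'I_K) : PT := val (enum_val x).
Definition cfg u : config Q K := [ffun x => atn (proc x).1.2 u].
Definition tagof x u := atn (proc x).2 u.
Definition grp x := (proc x).1.1.

Lemma atnE (T : Type) (F : nat -> T) u : u <= n -> atn [ffun v : 'I_n.+1 => F v] u = F u.
Proof. by move=> un; rewrite /atn ffunE inordK. Qed.

Lemma mk_proc (p : PT) : valid p -> exists x, proc x = p.
Proof. move=> vp; exists (enum_rank (exist _ p vp : PP)); by rewrite /proc enum_rankK. Qed.

Lemma F1 x u : u < n -> mv (h u) (grp x) (cfg u x) (cfg u.+1 x) (tagof x u).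
Proof.
move=> un; have := valP (enum_val x) => /and3P [_ _ /forallP /(_ (Ordinal un))] /=.
by rewrite /cfg !ffunE.
Qed.

Lemma cfg0 x : cfg 0 x = s (grp x).
Proof. by have := valP (enum_val x) => /and3P [/eqP e _ _]; rewrite /cfg ffunE. Qed.

Lemma F2 : cfg n = cfg 0.
Proof.
apply/ffunP => x; rewrite cfg0.
by have := valP (enum_val x) => /and3P [_ /eqP e _]; rewrite /cfg ffunE.
Qed.

Lemma F3 t : t < n -> exists x, tagof x t.
Proof.
move=> tn; have [Hd Hs0 Hs1 _ _] := HE tn.
have [f1 [b1 [f1t f10 H1]]] := back (ltnW tn) Hs0.
have e1 : t.+1 + (n - t.+1) = n by rewrite subnKC.
have [f2 [b2 [f2t f2n H2]]] := fwd_tr e1 Hs1.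
pose trf u := if u <= t then f1 u else f2 u.
pose tgf u := if u < t then b1 u else if u == t then true else b2 u.
have vp : valid ((h t).1.1.1, [ffun v : 'I_n.+1 => trf v], [ffun v : 'I_n.+1 => tgf v]).
  apply/and3P; split => /=.
  - by rewrite atnE // /trf leq0n f10.
  - by rewrite atnE // /trf leqNgt tn f2n.
  apply/forallP => u; have un := ltn_ord u.
  rewrite !atnE ?(ltnW un) // /trf /tgf.
  case: (ltngtP u t) => ut.
  - exact: H1.
  - exact: H2.
  - by rewrite ut f1t f2t /mv /= !eqxx.
have [x px] := mk_proc vp.
by exists x; rewrite /tagof px /= atnE ?(ltnW tn) // /tgf ltnn eqxx.
Qed.

Lemma grpP i : exists x, grp x = i.
Proof.
have vp : valid (i, [ffun _ : 'I_n.+1 => s i], [ffun _ : 'I_n.+1 => false]).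
  apply/and3P; split => /=; rewrite /atn ?ffunE ?eqxx //.
  by apply/forallP => u; rewrite !ffunE /mv eqxx.
by have [x px] := mk_proc vp; exists x; rewrite /grp px.
Qed.

Lemma step t : t < n -> cstep_plus delta (cfg t) (cfg t.+1).
Proof.
move=> tn; have [Hd _ _ _ _] := HE tn.
have [x0 tx0] := F3 tn.
have := F1 x0 tn; rewrite /mv tx0 => /and3P [_ /eqP e0 /eqP e1].
pose d : config Q K := [ffun x => if (x == x0) || ~~ tagof x t then cfg t.+1 x else cfg t x].
have dE x : d x = if (x == x0) || ~~ tagof x t then cfg t.+1 x else cfg t x.
  by rewrite /d; exact: (ffunE _ x).
have st : cstep delta (cfg t) d.
  exists (h t).2, x0; rewrite dE eqxx /= e0 e1; split => //.
  exists [set x | ~~ tagof x t && (cfg t.+1 x != cfg t x)]; split; first by rewrite inE tx0.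
  split.
    move=> x; rewrite inE dE => /andP [tg ne]; rewrite tg orbT.
    by move: (F1 x tn); rewrite /mv (negbTE tg) (negbTE ne).
  move=> x; rewrite inE dE negb_and negbK => H xx; rewrite (negbTE xx) /=.
  by case: (tagof x t) H => //=; rewrite negbK => /eqP.
have := @sends D Q delta K (h t).2 [set x | tagof x t && (x != x0)] d (cfg t.+1).
case.
- move=> x; rewrite inE dE negb_and negbK; case: (eqVneq x x0) => [->|xx]; first by [].
  by rewrite orbF => ntg; rewrite /= ntg.
- move=> x; rewrite inE dE => /andP [tg xx]; rewrite (negbTE xx) tg /=.
  by move: (F1 x tn); rewrite /mv tg => /and3P [_ /eqP -> /eqP ->].
- by move=> <-; apply: t_step.
- by move=> H; apply: t_trans H; apply: t_step.
Qed.

Lemma run t : 0 < t -> t <= n -> cstep_plus delta (cfg 0) (cfg t).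
Proof.
elim: t => [//|t IH] _ tn.
case: (posnP t) => [->|tp]; first exact: step.
apply: t_trans (IH tp (ltnW tn)) (step tn).
Qed.

Lemma traj_main : exists (k : nat) (c : config Q k),
  SetC c = [set s i | i in 'I_m] /\ cstep_plus delta c c.
Proof.
exists K, (cfg 0); split; last by rewrite -{2}F2; apply: run.
apply/setP => q; apply/imsetP/imsetP => [[x _ ->]|[i _ ->]].
  by exists (grp x) => //; rewrite cfg0.
by have [x <-] := grpP i; exists x => //; rewrite cfg0.
Qed.
End Traj.

Theorem lemma2 (D Q : finType) (I : {set Q}) (delta : Q -> Ops D -> Q -> bool)
  (m : nat) (s : 'I_m -> Q) :
  m <= #|Q| ->
  (Gpath_plus delta [ffun i => [set s i]] [ffun i => [set s i]] <->
   exists (k : nat) (c : config Q k),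
     SetC c = [set s i | i in 'I_m] /\ cstep_plus delta c c).
Proof.
move=> _; split.
  move=> HP.
  have [n [Vs [h [n0 V0s Vns HE]]]] := ct_path (@edge_work D Q delta m) HP.
  exact: (traj_main n0 V0s Vns HE).
case=> k [c [Hset Hc]].
have [x0 _] : exists x0 : 'I_k, True.
  by elim: Hc => [y z [a [x _]]|y z w _ IH _ _]; [exists x | exact: IH].
have : c x0 \in SetC c by apply/imsetP; exists x0.
rewrite Hset => /imsetP [i0 _ _].
pose g x := odflt i0 [pick i | s i == c x].
have gE x : s (g x) = c x.
  rewrite /g; case: pickP => [i /eqP //|H].
  have : c x \in SetC c by apply/imsetP; exists x.
  by rewrite Hset => /imsetP [i _ e]; move: (H i); rewrite e eqxx.
have PhiE : Phi s g c = [ffun i => [set s i]].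
  apply/ffunP => i; rewrite !ffunE; case: ifP => // /existsP [y /eqP gy].
  apply/setP => q; rewrite inE; apply/imsetP/eqP.
    by case=> z; rewrite inE => /eqP gz ->; rewrite -gE gz.
  by move=> ->; exists y; rewrite ?inE ?gy // -gE gy.
rewrite -PhiE; exact: path_edge.
Qed.
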